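(* Let $f$ be a real-analytic function of one real variable that is not identically zero. Consider on $\mathbb R^2$ the system $\ddot x_1=\dot x_1^2\,f(\dot x_2/\dot x_1)$, $\ddot x_2=\dot x_1\dot x_2\,f(\dot x_2/\dot x_1)$, i.e. the spray with $f^1=y_1^2f(y_2/y_1)$, $f^2=y_1y_2f(y_2/y_1)$ on the region $y_1\neq0$. Then this system is not the geodesic system of any non-Berwald Landsberg metric: there is no open set $U$ (in the domain of the spray) on which the Berwald curvature $\mathcal R$ is not identically zero and a function $E:U\to\mathbb R$ satisfying (H), (EL), (Ls) with $(g_{ij})$ positive definite.
   Context: Coordinates $(x^1,x^2,y^1,y^2)=(x_1,x_2,y_1,y_2)$ on $T\mathbb R^2$. For the spray $S=y^i\frac{\partial}{\partial x^i}+f^i\frac{\partial}{\partial y^i}$: $\Gamma^i_j=-\frac12\frac{\partial f^i}{\partial y^j}$, $\Gamma^i_{jk}=\frac{\partial\Gamma^i_j}{\partial y^k}$; Berwald curvature $\mathcal R=-\frac12\frac{\partial^3f^l}{\partial y^i\partial y^j\partial y^k}dx^i\otimes dx^j\otimes dx^k\otimes\frac{\partial}{\partial y^l}$ (a Landsberg metric is of Berwald type iff $\mathcal R=0$). For $E$ smooth, $g_{ij}=\frac{\partial^2E}{\partial y^i\partial y^j}$; (H) $y^i\frac{\partial E}{\partial y^i}-2E=0$; (EL) $y^j\frac{\partial^2E}{\partial x^j\partial y^i}+f^j\frac{\partial^2E}{\partial y^j\partial y^i}-\frac{\partial E}{\partial x^i}=0$; (Ls) $\frac{\partial g_{jk}}{\partial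 x^i}-\Gamma^l_i\frac{\partial g_{jk}}{\partial y^l}-\Gamma^l_{ik}g_{lj}-\Gamma^l_{ij}g_{lk}=0$. *)

(* Defs.v *)
From Stdlib Require Import Reals Lra List.
From Coquelicot Require Import Coquelicot.
Open Scope R_scope.

Inductive I2 : Type := ix1 | ix2.

Definition sum2 (F : I2 -> R) : R := F ix1 + F ix2.

(** Coordinates on T R^2 = R^4 : x^1, x^2, y^1, y^2. *)
Inductive Coord : Type := X (i : I2) | Y (i : I2).

Definition Point := Coord -> R.

Definition upd (p : Point) (c : Coord) (t : R) : Point :=
  fun d => match c, d with
           | X ix1, X ix1 | X ix2, X ix2 | Y ix1, Y ix1 | Y ix2, Y ix2 => t
           | _, _ => p d
           end.

Definition pd (c : Coord) (F : Point -> R) : Point -> R :=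
  fun p => Derive (fun t => F (upd p c t)) (p c).

Definition pds (l : list Coord) (F : Point -> R) : Point -> R :=
  fold_right pd F l.

Definition open_pts (U : Point -> Prop) : Prop :=
  forall p, U p -> exists eps, 0 < eps /\
    forall q, (forall c, Rabs (q c - p c) < eps) -> U q.

Definition continuous_at_pt (F : Point -> R) (p : Point) : Prop :=
  forall eps, 0 < eps -> exists delta, 0 < delta /\
    forall q, (forall c, Rabs (q c - p c) < delta) -> Rabs (F q - F p) < eps.

Definition smooth_on (U : Point -> Prop) (F : Point -> R) : Prop :=
  forall (l : list Coord) (p : Point), U p ->
    continuous_at_pt (pds l F) p /\
    forall c, ex_derive (fun t => pds l F (upd p c t)) (p c).

Definition real_analytic (f : R -> R) : Prop :=
  forall x0, exists r (a : nat -> R), 0 < r /\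
    forall x, Rabs (x - x0) < r ->
      is_series (fun n => a n * (x - x0) ^ n) (f x).

Definition spray (f : R -> R) (i : I2) : Point -> R :=
  fun p => match i with
           | ix1 => p (Y ix1) ^ 2 * f (p (Y ix2) / p (Y ix1))
           | ix2 => p (Y ix1) * p (Y ix2) * f (p (Y ix2) / p (Y ix1))
           end.

Definition Gam1 (f : R -> R) (i j : I2) : Point -> R :=
  fun p => - / 2 * pd (Y j) (spray f i) p.

Definition Gam2 (f : R -> R) (i j k : I2) : Point -> R :=
  pd (Y k) (Gam1 f i j).

Definition berwald (f : R -> R) (i j k l : I2) : Point -> R :=
  fun p => - / 2 * pds (Y i :: Y j :: Y k :: nil) (spray f l) p.

Definition gmet (E : Point -> R) (i j : I2) : Point -> R :=
  pds (Y i :: Y j :: nil) E.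

Definition cond_H (E : Point -> R) (p : Point) : Prop :=
  sum2 (fun i => p (Y i) * pd (Y i) E p) - 2 * E p = 0.

Definition cond_EL (f : R -> R) (E : Point -> R) (p : Point) : Prop :=
  forall i : I2,
    sum2 (fun j => p (Y j) * pds (X j :: Y i :: nil) E p)
    + sum2 (fun j => spray f j p * pds (Y j :: Y i :: nil) E p)
    - pd (X i) E p = 0.

Definition cond_Ls (f : R -> R) (E : Point -> R) (p : Point) : Prop :=
  forall i j k : I2,
    pd (X i) (gmet E j k) p
    - sum2 (fun l => Gam1 f l i p * pd (Y l) (gmet E j k) p)
    - sum2 (fun l => Gam2 f l i k p * gmet E l j p)
    - sum2 (fun l => Gam2 f l i j p * gmet E l k p) = 0.

Definition posdef_g (E : Point -> R) (p : Point) : Prop :=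
  forall v : I2 -> R, (v ix1 <> 0 \/ v ix2 <> 0) ->
    0 < sum2 (fun j => sum2 (fun k => gmet E j k p * v j * v k)).

(* Main.v *)
Require Import Defs.
From Stdlib Require Import Reals Lra List FunctionalExtensionality.
From Coquelicot Require Import Coquelicot.
Open Scope R_scope.

Definition Coord_eq_dec : forall c d : Coord, {c = d} + {c <> d}.
Proof. decide equality; decide equality. Defined.

Lemma upd_same p c t : upd p c t c = t.
Proof. destruct c as [[|]|[|]]; reflexivity. Qed.

Lemma upd_other p c d t : c <> d -> upd p c t d = p d.
Proof. intros H; destruct c as [[|]|[|]], d as [[|]|[|]]; try reflexivity; congruence. Qed.

Lemma upd_id p c : upd p c (p c) = p.
Proof. apply functional_extensionality; intros d.
destruct c as [[|]|[|]], d as [[|]|[|]]; reflexivity. Qed.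

Lemma upd_upd p c s t : upd (upd p c s) c t = upd p c t.
Proof. apply functional_extensionality; intros d.
destruct c as [[|]|[|]], d as [[|]|[|]]; reflexivity. Qed.

Lemma upd_comm p c d s t : c <> d -> upd (upd p c s) d t = upd (upd p d t) c s.
Proof. intros H; apply functional_extensionality; intros e.
destruct c as [[|]|[|]], d as [[|]|[|]], e as [[|]|[|]]; try reflexivity; congruence. Qed.

Definition ipd (c : Coord) (F : Point -> R) (q : Point) (v : R) : Prop :=
  is_derive (fun t => F (upd q c t)) (q c) v.

Lemma ipd_val c F q v w : ipd c F q v -> v = w -> ipd c F q w.
Proof. intros H ->; exact H. Qed.

Lemma ipd_pd c F q v : ipd c F q v -> pd c F q = v.
Proof. intros H; unfold pd; apply is_derive_unique; exact H. Qed.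

Lemma ipd_const c k q : ipd c (fun _ => k) q 0.
Proof. unfold ipd. apply (is_derive_const k (q c)). Qed.

Lemma ipd_coord_same c q : ipd c (fun r => r c) q 1.
Proof. unfold ipd. apply is_derive_ext with (fun t => t).
intros t; now rewrite upd_same. apply (is_derive_id (q c)). Qed.

Lemma ipd_coord_diff c d q : c <> d -> ipd c (fun r => r d) q 0.
Proof. intros H. unfold ipd. apply is_derive_ext with (fun t => q d).
intros t; now rewrite upd_other. apply (is_derive_const (q d) (q c)). Qed.

Lemma ipd_plus c F G q u v : ipd c F q u -> ipd c G q v ->
  ipd c (fun r => F r + G r) q (u + v).
Proof. unfold ipd; intros H1 H2. apply (is_derive_plus _ _ _ _ _ H1 H2). Qed.

Lemma ipd_minus c F G q u v : ipd c F q u -> ipd c G q v ->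
  ipd c (fun r => F r - G r) q (u - v).
Proof. unfold ipd; intros H1 H2. apply (is_derive_minus _ _ _ _ _ H1 H2). Qed.

Lemma ipd_opp c F q u : ipd c F q u -> ipd c (fun r => - F r) q (- u).
Proof. unfold ipd; intros H1. apply (is_derive_opp _ _ _ H1). Qed.

Lemma ipd_mult c F G q u v : ipd c F q u -> ipd c G q v ->
  ipd c (fun r => F r * G r) q (u * G q + F q * v).
Proof. unfold ipd; intros H1 H2.
assert (E1: F (upd q c (q c)) = F q) by now rewrite upd_id.
assert (E2: G (upd q c (q c)) = G q) by now rewrite upd_id.
rewrite <- E1, <- E2.
apply (is_derive_mult (fun t => F (upd q c t)) (fun t => G (upd q c t)) _ _ _ H1 H2).
intros; apply Rmult_comm. Qed.

Lemma ipd_inv c F q u : ipd c F q u -> F q <> 0 ->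
  ipd c (fun r => / F r) q (- u / F q ^ 2).
Proof. unfold ipd; intros H1 H2.
assert (E: F (upd q c (q c)) = F q) by now rewrite upd_id.
rewrite <- E. apply (is_derive_inv _ _ _ H1). cbn beta. now rewrite E. Qed.

Lemma ipd_div c F G q u v : ipd c F q u -> ipd c G q v -> G q <> 0 ->
  ipd c (fun r => F r / G r) q ((u * G q - F q * v) / G q ^ 2).
Proof. intros H1 H2 H3. unfold Rdiv.
eapply ipd_val. apply ipd_mult. exact H1. apply ipd_inv. exact H2. exact H3.
cbn beta. field. exact H3. Qed.

Lemma ipd_pow2 c F q u : ipd c F q u -> ipd c (fun r => F r ^ 2) q (2 * F q * u).
Proof. intros H. eapply ipd_val. apply (ipd_mult c F (fun r => F r * 1)).
exact H. eapply ipd_val. apply ipd_mult. exact H. apply ipd_const. reflexivity.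
simpl; ring. Qed.

Lemma ipd_pow3 c F q u : ipd c F q u -> ipd c (fun r => F r ^ 3) q (3 * F q ^ 2 * u).
Proof. intros H. eapply ipd_val. apply (ipd_mult c F (fun r => F r ^ 2)).
exact H. apply ipd_pow2. exact H. simpl; ring. Qed.

Lemma ipd_comp (h h' : R -> R) c G q v :
  (forall x, is_derive h x (h' x)) -> ipd c G q v ->
  ipd c (fun r => h (G r)) q (h' (G q) * v).
Proof. unfold ipd; intros Hh H.
assert (E: G (upd q c (q c)) = G q) by now rewrite upd_id.
rewrite <- E. pose proof (is_derive_comp h _ _ _ _ (Hh (G (upd q c (q c)))) H) as H'.
replace (h' (G (upd q c (q c))) * v) with (scal v (h' (G (upd q c (q c))))).
exact H'. unfold scal; simpl; unfold mult; simpl; ring.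
Qed.

Definition lopen (V : Point -> Prop) : Prop :=
  forall r, V r -> forall c, exists eps, 0 < eps /\
    forall t, Rabs (t - r c) < eps -> V (upd r c t).

Lemma open_lopen U : open_pts U -> lopen U.
Proof. intros HU r Hr c. destruct (HU r Hr) as [eps [He H]].
exists eps; split; auto. intros t Ht. apply H. intros d.
destruct (Coord_eq_dec c d) as [<-|Hn].
- now rewrite upd_same.
- rewrite upd_other by exact Hn. replace (r d - r d) with 0 by ring.
  rewrite Rabs_R0; exact He. Qed.

Lemma locally_R (P : R -> Prop) x eps : 0 < eps ->
  (forall t, Rabs (t - x) < eps -> P t) -> locally x P.
Proof. intros He H. exists (mkposreal eps He). intros t Ht. apply H. exact Ht. Qed.

Lemma lopen_locally V r c (P : Point -> Prop) : lopen V -> V r ->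
  (forall s, V s -> P s) -> locally (r c) (fun t => P (upd r c t)).
Proof. intros HV Hr H. destruct (HV r Hr c) as [eps [He H2]].
apply locally_R with eps; auto. Qed.

Lemma ipd_loc V c F G q v : lopen V -> V q -> (forall r, V r -> F r = G r) ->
  ipd c F q v -> ipd c G q v.
Proof. intros HV Hq H H1. unfold ipd. eapply is_derive_ext_loc. 2: exact H1.
apply (lopen_locally V q c (fun s => F s = G s)); auto. Qed.

Lemma ipd_zero V c F q v : lopen V -> V q -> (forall r, V r -> F r = 0) ->
  ipd c F q v -> v = 0.
Proof. intros HV Hq H H1.
assert (H2 : ipd c (fun _ => 0) q v) by (eapply ipd_loc; eauto).
apply ipd_pd in H2. rewrite <- H2. apply ipd_pd. apply ipd_const. Qed.

Lemma pd_loc V c F G q : lopen V -> V q -> (forall r, V r -> F r = G r) ->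
  pd c F q = pd c G q.
Proof. intros HV Hq H. unfold pd. apply Derive_ext_loc.
apply (lopen_locally V q c (fun s => F s = G s)); auto. Qed.

Lemma pds_loc V F G : lopen V -> (forall r, V r -> F r = G r) ->
  forall l r, V r -> pds l F r = pds l G r.
Proof. intros HV H l. induction l as [|c l IH]; intros r Hr; simpl.
- apply H; exact Hr.
- apply (pd_loc V); auto. Qed.

Lemma sm_ipd U E l c q : smooth_on U E -> U q ->
  ipd c (pds l E) q (pd c (pds l E) q).
Proof. intros HE Hq. unfold ipd, pd. apply Derive_correct.
apply (proj2 (HE l q Hq) c). Qed.

Section Sch.
Variable U : Point -> Prop.
Variable E : Point -> R.
Hypothesis HU : open_pts U.
Hypothesis HE : smooth_on U E.

Let pt (q : Point) (a b : Coord) (u v : R) : Point := upd (upd q a u) b v.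

Lemma schwarz_pd q l a b : U q ->
  pd a (pd b (pds l E)) q = pd b (pd a (pds l E)) q.
Proof.
intros Hq. destruct (Coord_eq_dec a b) as [<-|Hab]; [reflexivity|].
set (F := pds l E).
destruct (HU q Hq) as [eps0 [He0 Hin]].
assert (Hba : b <> a) by congruence.
assert (ptb : forall u v, pt q a b u v b = v) by (intros; unfold pt; apply upd_same).
assert (pta : forall u v, pt q a b u v a = u).
{ intros; unfold pt. rewrite upd_other by exact Hba. apply upd_same. }
assert (ptua : forall u v s, upd (pt q a b u v) a s = pt q a b s v).
{ intros; unfold pt. rewrite upd_comm by exact Hba. now rewrite upd_upd. }
assert (ptub : forall u v s, upd (pt q a b u v) b s = pt q a b u s).
{ intros; unfold pt. now rewrite upd_upd. }
assert (ptq : pt q a b (q a) (q b) = q) by (unfold pt; now rewrite !upd_id).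
assert (ptin : forall u v d, Rabs (u - q a) < eps0 -> Rabs (v - q b) < eps0 ->
   Rabs (pt q a b u v d - q d) < eps0).
{ intros u v d Hu Hv. unfold pt.
  destruct (Coord_eq_dec b d) as [<-|Hbd]. now rewrite upd_same.
  rewrite upd_other by exact Hbd.
  destruct (Coord_eq_dec a d) as [<-|Had]. now rewrite upd_same.
  rewrite upd_other by exact Had. replace (q d - q d) with 0 by ring.
  rewrite Rabs_R0; exact He0. }
assert (ptU : forall u v, Rabs (u - q a) < eps0 -> Rabs (v - q b) < eps0 ->
   U (pt q a b u v)) by (intros; apply Hin; intros; apply ptin; auto).
assert (inner1 : forall z t, Derive (fun t' => F (pt q a b z t')) t = pd b F (pt q a b z t)).
{ intros. unfold pd. rewrite ptb. apply Derive_ext. intros s. now rewrite ptub. }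
assert (outer1 : forall u v, Derive (fun z => pd b F (pt q a b z v)) u
                 = pd a (pd b F) (pt q a b u v)).
{ intros. unfold pd at 2. rewrite pta. apply Derive_ext. intros s. now rewrite ptua. }
assert (inner2 : forall z t, Derive (fun t' => F (pt q a b t' z)) t = pd a F (pt q a b t z)).
{ intros. unfold pd. rewrite pta. apply Derive_ext. intros s. now rewrite ptua. }
assert (outer2 : forall u v, Derive (fun z => pd a F (pt q a b u z)) v
                 = pd b (pd a F) (pt q a b u v)).
{ intros. unfold pd at 2. rewrite ptb. apply Derive_ext. intros s. now rewrite ptub. }
pose proof (Schwarz (fun u v => F (pt q a b u v)) (q a) (q b)) as HS.
cbv beta in HS.
assert (L : Derive (fun z => Derive (fun t => F (pt q a b z t)) (q b)) (q a)
            = pd a (pd b F) q).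
{ transitivity (pd a (pd b F) (pt q a b (q a) (q b))); [|now rewrite ptq]. rewrite <- outer1. apply Derive_ext. intros; apply inner1. }
assert (Rr : Derive (fun z => Derive (fun t => F (pt q a b t z)) (q a)) (q b)
            = pd b (pd a F) q).
{ transitivity (pd b (pd a F) (pt q a b (q a) (q b))); [|now rewrite ptq]. rewrite <- outer2. apply Derive_ext. intros; apply inner2. }
rewrite <- L, <- Rr. apply HS.
- exists (mkposreal eps0 He0). intros u v Hu Hv. simpl in Hu, Hv.
  pose proof (ptU u v Hu Hv) as Hr.
  split; [|split; [|split]].
  + pose proof (proj2 (HE l _ Hr) a) as H. rewrite pta in H.
    eapply ex_derive_ext. 2: exact H. intros; simpl. now rewrite ptua.
  + pose proof (proj2 (HE l _ Hr) b) as H. rewrite ptb in H.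
    eapply ex_derive_ext. 2: exact H. intros; simpl. now rewrite ptub.
  + pose proof (proj2 (HE (b :: l) _ Hr) a) as H. rewrite pta in H.
    eapply ex_derive_ext. 2: exact H. intros; simpl. rewrite inner1. now rewrite ptua.
  + pose proof (proj2 (HE (a :: l) _ Hr) b) as H. rewrite ptb in H.
    eapply ex_derive_ext. 2: exact H. intros; simpl. rewrite inner2. now rewrite ptub.
- intros eps. destruct (proj1 (HE (a :: b :: l) q Hq) eps (cond_pos eps)) as [d [Hd Hc]].
  exists (mkposreal (Rmin d eps0) (Rmin_pos _ _ Hd He0)). intros u v Hu Hv. simpl in Hu, Hv.
  assert (Eq: forall u v, Derive (fun z => Derive (fun t => F (pt q a b z t)) v) u = pd a (pd b F) (pt q a b u v))
    by (intros; rewrite <- outer1; apply Derive_ext; intros; apply inner1).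
  rewrite !Eq, ptq. apply Hc. intros c.
  destruct (Coord_eq_dec b c) as [<-|Hbd]. unfold pt; rewrite upd_same.
  eapply Rlt_le_trans. exact Hv. apply Rmin_l.
  unfold pt; rewrite upd_other by exact Hbd.
  destruct (Coord_eq_dec a c) as [<-|Had]. rewrite upd_same.
  eapply Rlt_le_trans. exact Hu. apply Rmin_l.
  rewrite upd_other by exact Had. replace (q c - q c) with 0 by ring.
  rewrite Rabs_R0; exact Hd.
- intros eps. destruct (proj1 (HE (b :: a :: l) q Hq) eps (cond_pos eps)) as [d [Hd Hc]].
  exists (mkposreal (Rmin d eps0) (Rmin_pos _ _ Hd He0)). intros u v Hu Hv. simpl in Hu, Hv.
  assert (Eq: forall u v, Derive (fun z => Derive (fun t => F (pt q a b t z)) u) v = pd b (pd a F) (pt q a b u v))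
    by (intros; rewrite <- outer2; apply Derive_ext; intros; apply inner2).
  rewrite !Eq, ptq. apply Hc. intros c.
  destruct (Coord_eq_dec b c) as [<-|Hbd]. unfold pt; rewrite upd_same.
  eapply Rlt_le_trans. exact Hv. apply Rmin_l.
  unfold pt; rewrite upd_other by exact Hbd.
  destruct (Coord_eq_dec a c) as [<-|Had]. rewrite upd_same.
  eapply Rlt_le_trans. exact Hu. apply Rmin_l.
  rewrite upd_other by exact Had. replace (q c - q c) with 0 by ring.
  rewrite Rabs_R0; exact Hd.
Qed.
End Sch.
Lemma ipd_unfold c F q v : ipd c F q v <-> is_derive (fun t => F (upd q c t)) (q c) v.
Proof. reflexivity. Qed.
Global Opaque ipd.

Definition LPS (h : R -> R) : Prop := forall x0, exists (a : nat -> R) (r : R),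
  0 < r /\ Rbar_le r (CV_radius a) /\
  forall x, Rabs (x - x0) < r -> h x = PSeries a (x - x0).

Lemma analytic_LPS f : real_analytic f -> LPS f.
Proof.
intros Hf x0. destruct (Hf x0) as [r [a [Hr H]]]. exists a, r. split; [exact Hr|split].
- assert (Hin : forall h, 0 <= h < r -> Rbar_le h (CV_radius a)).
  { intros h [Hh1 Hh2]. destruct (CV_radius_bounded a) as [Hub _]. apply Hub.
    assert (Hs : is_series (fun n => a n * (x0 + h - x0) ^ n) (f (x0 + h))).
    { apply H. replace (x0 + h - x0) with h by ring. rewrite Rabs_pos_eq; lra. }
    replace (x0 + h - x0) with h in Hs by ring.
    assert (Hl : is_lim_seq (fun n => a n * h ^ n) 0).
    { apply ex_series_lim_0. eexists; exact Hs. }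
    destruct (filterlim_bounded (fun n => a n * h ^ n)) as [M HM].
    { exists 0. exact Hl. }
    exists M. intros n. exact (HM n). }
  pose proof (CV_radius_ge_0 a) as H0.
  destruct (CV_radius a) as [R0| |] eqn:Hc; simpl; auto.
  + simpl in H0. destruct (Rle_or_lt r R0) as [Hle|Hlt]; [exact Hle|].
    exfalso. assert (Hx := Hin ((R0 + r)/2)). simpl in Hx. 
    assert (R0 + r <= 2 * R0). { apply Rmult_le_reg_r with (/2). lra.
      replace ((R0 + r) * /2) with ((R0 + r)/2) by field. 
      replace (2 * R0 * / 2) with R0 by field. apply Hx; lra. }
    lra.
- intros x Hx. symmetry. apply is_series_unique. apply H. exact Hx.
Qed.

Lemma LPS_is_derive h x0 a r x : 0 < r -> Rbar_le r (CV_radius a) ->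
  (forall x, Rabs (x - x0) < r -> h x = PSeries a (x - x0)) ->
  Rabs (x - x0) < r -> is_derive h x (PSeries (PS_derive a) (x - x0)).
Proof.
intros Hr Hc H Hx.
assert (Hl : Rbar_lt (Rabs (x - x0)) (CV_radius a)).
{ eapply Rbar_lt_le_trans. 2: exact Hc. simpl. exact Hx. }
apply is_derive_ext_loc with (fun y => PSeries a (y - x0)).
- set (e := r - Rabs (x - x0)). assert (He : 0 < e) by (unfold e; lra).
  exists (mkposreal e He). intros y Hy. simpl in Hy. change (Rabs (y - x) < e) in Hy.
  symmetry. apply H. unfold e in Hy.
  replace (y - x0) with ((y - x) + (x - x0)) by ring.
  eapply Rle_lt_trans. apply Rabs_triang. lra.
- pose proof (is_derive_PSeries a (x - x0) Hl) as HD.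
  pose proof (is_derive_comp (PSeries a) (fun y => y - x0) x _ 1 HD) as HC.
  replace (PSeries (PS_derive a) (x - x0)) with (scal 1 (PSeries (PS_derive a) (x - x0))).
  apply HC. 
  + auto_derive. easy. ring.
  + unfold scal; simpl; unfold mult; simpl; ring.
Qed.

Lemma LPS_derive h : LPS h -> (forall x, is_derive h x (Derive h x)) /\ LPS (Derive h).
Proof.
intros H. split.
- intros x. destruct (H x) as [a [r [Hr [Hc Heq]]]].
  apply Derive_correct. eexists. eapply LPS_is_derive; eauto.
  replace (x - x) with 0 by ring. rewrite Rabs_R0; exact Hr.
- intros x0. destruct (H x0) as [a [r [Hr [Hc Heq]]]].
  exists (PS_derive a), r. split; [exact Hr|split].
  + rewrite CV_radius_derive. exact Hc.
  + intros x Hx. apply is_derive_unique. eapply LPS_is_derive; eauto.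
Qed.

Lemma const_on_ball (g dg : R -> R) x0 eta : 0 < eta ->
  (forall w, Rabs (w - x0) < eta -> is_derive g w (dg w)) ->
  (forall w, Rabs (w - x0) < eta -> dg w = 0) ->
  forall w, Rabs (w - x0) <= eta / 2 -> g w = g x0.
Proof. intros He Hd Hz w Hw.
destruct (MVT_cor4 g dg x0 (eta / 2)) with (b := w) as [c [Hc1 Hc2]].
- intros c Hc. apply Hd. lra.
- exact Hw.
- rewrite Hz in Hc1. lra. apply Rle_lt_trans with (Rabs (w - x0)). exact Hc2. lra. Qed.

Lemma affine_of_d2 (f d1 d2 : R -> R) u0 eta :
  (forall x, is_derive f x (d1 x)) -> (forall x, is_derive d1 x (d2 x)) -> 0 < eta ->
  (forall w, Rabs (w - u0) < eta -> d2 w = 0) ->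
  forall w, Rabs (w - u0) <= eta / 4 -> f w = f u0 + d1 u0 * (w - u0).
Proof. intros D0 D1 He Hz.
assert (Hc : forall w, Rabs (w - u0) <= eta / 2 -> d1 w = d1 u0).
{ apply (const_on_ball d1 d2); auto. }
assert (Hg : forall w, Rabs (w - u0) <= (eta / 2) / 2 -> f w - d1 u0 * w = f u0 - d1 u0 * u0).
{ apply (const_on_ball (fun w => f w - d1 u0 * w) (fun w => d1 w - d1 u0)). lra.
  - intros w Hw. apply @is_derive_minus. apply D0.
    eapply is_derive_ext. intros t; reflexivity.
    replace (d1 u0) with (d1 u0 * 1) at 2 by ring. apply is_derive_scal. apply (is_derive_id w).
  - intros w Hw. rewrite Hc. ring. lra. }
intros w Hw. specialize (Hg w). lra. Qed.

Lemma locR (P : R -> Prop) x eps : 0 < eps ->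
  (forall t, Rabs (t - x) < eps -> P t) -> locally x P.
Proof. intros He H. exists (mkposreal eps He). intros t Ht. apply H. exact Ht. Qed.

Lemma d2_of_affine (f d1 d2 : R -> R) u0 eta A B :
  (forall x, is_derive f x (d1 x)) -> (forall x, is_derive d1 x (d2 x)) -> 0 < eta ->
  (forall w, Rabs (w - u0) < eta -> f w = A + B * w) -> d2 u0 = 0.
Proof. intros D0 D1 He Hf.
assert (Hd1 : forall w, Rabs (w - u0) < eta -> d1 w = B).
{ intros w Hw.
  assert (Hl : is_derive f w B).
  { apply is_derive_ext_loc with (fun x => A + B * x).
    - apply locR with (eta - Rabs (w - u0)). lra.
      intros t Ht. symmetry. apply Hf.
      replace (t - u0) with ((t - w) + (w - u0)) by ring.
      eapply Rle_lt_trans. apply Rabs_triang. lra.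
    - auto_derive. easy. ring. }
  rewrite <- (is_derive_unique f w (d1 w) (D0 w)). apply is_derive_unique. exact Hl. }
assert (Hl : is_derive d1 u0 0).
{ apply is_derive_ext_loc with (fun _ => B).
  - apply locR with eta. exact He. intros t Ht. symmetry. apply Hd1. exact Ht.
  - apply (is_derive_const B u0). }
rewrite <- (is_derive_unique d1 u0 (d2 u0) (D1 u0)). apply is_derive_unique. exact Hl. Qed.

Section Fns.
Variables (f d1 d2 d3 : R -> R).
Hypothesis D0 : forall x, is_derive f x (d1 x).
Hypothesis D1 : forall x, is_derive d1 x (d2 x).
Hypothesis D2 : forall x, is_derive d2 x (d3 x).

Ltac ipd_step :=
  first [ apply ipd_const
        | apply ipd_coord_same
        | (apply ipd_coord_diff; discriminate)
        | apply ipd_plus | apply ipd_minus | apply ipd_opp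
        | apply ipd_div | apply ipd_pow2 | apply ipd_pow3 | apply ipd_mult
        | (apply (ipd_comp f d1); [exact D0|])
        | (apply (ipd_comp d1 d2); [exact D1|])
        | (apply (ipd_comp d2 d3); [exact D2|]) ].

Ltac ipd_auto := repeat ipd_step.

Definition sp1 (i j : I2) (r : Point) : R :=
  let a := r (Y ix1) in let b := r (Y ix2) in let u := b / a in
  match i, j with
  | ix1, ix1 => 2 * a * f u - b * d1 u
  | ix1, ix2 => a * d1 u
  | ix2, ix1 => b * f u - b ^ 2 / a * d1 u
  | ix2, ix2 => a * f u + b * d1 u
  end.

Definition sp2 (i j k : I2) (r : Point) : R :=
  let a := r (Y ix1) in let b := r (Y ix2) in let u := b / a in
  match i, j, k with
  | ix1, ix1, ix1 => 2 * f u - 2 * (b / a) * d1 u + (b ^ 2 / a ^ 2) * d2 u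
  | ix1, ix1, ix2 => d1 u - b / a * d2 u
  | ix1, ix2, ix1 => d1 u - b / a * d2 u
  | ix1, ix2, ix2 => d2 u
  | ix2, ix1, ix1 => b ^ 3 / a ^ 3 * d2 u
  | ix2, ix1, ix2 => f u - b / a * d1 u - b ^ 2 / a ^ 2 * d2 u
  | ix2, ix2, ix1 => f u - b / a * d1 u - b ^ 2 / a ^ 2 * d2 u
  | ix2, ix2, ix2 => 2 * d1 u + b / a * d2 u
  end.

Lemma spray_ipd i j r : r (Y ix1) <> 0 -> ipd (Y j) (spray f i) r (sp1 i j r).
Proof. intros Ha. unfold spray, sp1.
destruct i, j; (eapply ipd_val; [ipd_auto; try exact Ha|]); cbn beta;
  rewrite ?upd_same; field; exact Ha. Qed.

Lemma sp1_ipd i j k r : r (Y ix1) <> 0 -> ipd (Y k) (sp1 i j) r (sp2 i j k r).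
Proof. intros Ha.
destruct i, j, k; cbv beta iota zeta delta [sp1 sp2];
  (eapply ipd_val; [ipd_auto; try exact Ha|]); cbn beta;
  rewrite ?upd_same; field; exact Ha. Qed.

Definition nz1 (r : Point) : Prop := r (Y ix1) <> 0.

Lemma lopen_nz1 : lopen nz1.
Proof. intros r Hr c. unfold nz1 in *. exists (Rabs (r (Y ix1))). split.
apply Rabs_pos_lt; exact Hr. intros t Ht.
destruct (Coord_eq_dec c (Y ix1)) as [->|Hn].
- rewrite upd_same. intros H0; subst t. rewrite Rabs_minus_sym, Rminus_0_r in Ht. lra.
- rewrite upd_other by exact Hn. exact Hr. Qed.

Lemma Gam1_val i j r : r (Y ix1) <> 0 -> Gam1 f i j r = - / 2 * sp1 i j r.
Proof. intros Ha. unfold Gam1. f_equal. apply ipd_pd. apply spray_ipd; exact Ha. Qed.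

Lemma Gam2_val i j k r : r (Y ix1) <> 0 -> Gam2 f i j k r = - / 2 * sp2 i j k r.
Proof. intros Ha. unfold Gam2. apply ipd_pd.
apply (ipd_loc nz1 _ (fun s => - / 2 * sp1 i j s)). apply lopen_nz1. exact Ha.
intros s Hs. symmetry. apply Gam1_val. exact Hs.
eapply ipd_val. apply ipd_mult. apply ipd_const. apply sp1_ipd. exact Ha. cbn beta. ring. Qed.

End Fns.

Section Main.
Variables (f d1 d2 d3 : R -> R).
Hypothesis D0 : forall x, is_derive f x (d1 x).
Hypothesis D1 : forall x, is_derive d1 x (d2 x).
Hypothesis D2 : forall x, is_derive d2 x (d3 x).
Variables (U : Point -> Prop) (E : Point -> R).
Hypothesis HU : open_pts U.
Hypothesis HUa : forall r, U r -> r (Y ix1) <> 0.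
Hypothesis HE : smooth_on U E.
Hypothesis HC : forall r, U r ->
  cond_H E r /\ cond_EL f E r /\ cond_Ls f E r /\ posdef_g E r.

Lemma lopenU : lopen U. Proof. apply open_lopen; exact HU. Qed.

Lemma smi c l q : U q -> ipd c (pds l E) q (pds (c :: l) E q).
Proof. intros Hq. exact (sm_ipd U E l c q HE Hq). Qed.
Lemma smi0 c q : U q -> ipd c E q (pds (c :: nil) E q).
Proof. intros Hq. exact (sm_ipd U E nil c q HE Hq). Qed.

Ltac ipd_step :=
  first [ apply ipd_const
        | apply ipd_coord_same
        | (apply ipd_coord_diff; discriminate)
        | (apply smi; assumption)
        | (apply smi0; assumption)
        | (apply HUa; assumption)
        | apply ipd_plus | apply ipd_minus | apply ipd_opp
        | apply ipd_div | apply ipd_pow2 | apply ipd_pow3 | apply ipd_mult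
        | (apply (ipd_comp f d1); [exact D0|])
        | (apply (ipd_comp d1 d2); [exact D1|])
        | (apply (ipd_comp d2 d3); [exact D2|]) ].
Ltac ipd_auto := repeat ipd_step.
Ltac fin := cbv beta iota zeta delta [sp1 sp2 spray]; field; apply HUa; assumption.

Lemma ipd_zero_val c F q v w : U q -> (forall r, U r -> F r = 0) ->
  ipd c F q v -> v = w -> w = 0.
Proof. intros Hq H Hv <-. eapply ipd_zero; eauto. apply lopenU. Qed.

Lemma sch l a b q : U q -> pds (a :: b :: l) E q = pds (b :: a :: l) E q.
Proof. intros Hq. exact (schwarz_pd U E HU HE q l a b Hq). Qed.

(* Schwarz as function equality on U, then differentiated *)
Lemma sch_loc c l a b q : U q -> pds (c :: a :: b :: l) E q = pds (c :: b :: a :: l) E q.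
Proof. intros Hq. simpl. apply (pd_loc U). apply lopenU. exact Hq.
intros r Hr. apply (sch l a b r Hr). Qed.

Definition Hx (r : Point) : R :=
  r (Y ix1) * pds (Y ix1 :: nil) E r + r (Y ix2) * pds (Y ix2 :: nil) E r - 2 * E r.

Lemma H0 q : U q -> Hx q = 0.
Proof. intros Hq. destruct (HC q Hq) as [H _]. exact H. Qed.

Lemma H1 j q : U q ->
  q (Y ix1) * pds (Y j :: Y ix1 :: nil) E q + q (Y ix2) * pds (Y j :: Y ix2 :: nil) E q
  - pds (Y j :: nil) E q = 0.
Proof. intros Hq. destruct j; [eapply (ipd_zero_val (Y ix1) Hx q)|eapply (ipd_zero_val (Y ix2) Hx q)]. all: try exact Hq. all: try exact H0.
all: unfold Hx; ipd_auto. all: cbn beta; ring. Qed.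

Lemma Hxd i q : U q ->
  q (Y ix1) * pds (X i :: Y ix1 :: nil) E q + q (Y ix2) * pds (X i :: Y ix2 :: nil) E q
  - 2 * pds (X i :: nil) E q = 0.
Proof. intros Hq. eapply (ipd_zero_val (X i) Hx q). exact Hq. exact H0.
unfold Hx. ipd_auto. cbn beta; ring. Qed.

Definition ELx (i : I2) (r : Point) : R :=
  r (Y ix1) * pds (X ix1 :: Y i :: nil) E r + r (Y ix2) * pds (X ix2 :: Y i :: nil) E r
  + (spray f ix1 r * pds (Y ix1 :: Y i :: nil) E r + spray f ix2 r * pds (Y ix2 :: Y i :: nil) E r)
  - pds (X i :: nil) E r.

Lemma EL0 i q : U q -> ELx i q = 0.
Proof. intros Hq. destruct (HC q Hq) as [_ [H _]]. exact (H i). Qed.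

Lemma D1EL2 q : U q ->
  pds (X ix1 :: Y ix2 :: nil) E q
  + q (Y ix1) * pds (Y ix1 :: X ix1 :: Y ix2 :: nil) E q
  + q (Y ix2) * pds (Y ix1 :: X ix2 :: Y ix2 :: nil) E q
  + (sp1 f d1 ix1 ix1 q * pds (Y ix1 :: Y ix2 :: nil) E q
     + spray f ix1 q * pds (Y ix1 :: Y ix1 :: Y ix2 :: nil) E q
     + (sp1 f d1 ix2 ix1 q * pds (Y ix2 :: Y ix2 :: nil) E q
     + spray f ix2 q * pds (Y ix1 :: Y ix2 :: Y ix2 :: nil) E q))
  - pds (Y ix1 :: X ix2 :: nil) E q = 0.
Proof. intros Hq. eapply (ipd_zero_val (Y ix1) (ELx ix2) q). exact Hq. apply EL0.
unfold ELx. ipd_auto. fin. Qed.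


Notation G1 l j q := (- / 2 * sp1 f d1 l j q).
Notation G2 l j k q := (- / 2 * sp2 f d1 d2 l j k q).

Lemma Ls_j12 j q : U q ->
  pds (X j :: Y ix1 :: Y ix2 :: nil) E q =
    (G1 ix1 j q * pds (Y ix1 :: Y ix1 :: Y ix2 :: nil) E q
     + G1 ix2 j q * pds (Y ix2 :: Y ix1 :: Y ix2 :: nil) E q)
  + (G2 ix1 j ix2 q * pds (Y ix1 :: Y ix1 :: nil) E q
     + G2 ix2 j ix2 q * pds (Y ix2 :: Y ix1 :: nil) E q)
  + (G2 ix1 j ix1 q * pds (Y ix1 :: Y ix2 :: nil) E q
     + G2 ix2 j ix1 q * pds (Y ix2 :: Y ix2 :: nil) E q).
Proof. intros Hq. destruct (HC q Hq) as [_ [_ [HL _]]].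
specialize (HL j ix1 ix2). unfold sum2 in HL.
assert (Ha := HUa q Hq).
rewrite !(Gam1_val f d1 D0) in HL by exact Ha.
rewrite !(Gam2_val f d1 d2 D0 D1) in HL by exact Ha.
change (pds (X j :: Y ix1 :: Y ix2 :: nil) E q - 
  (G1 ix1 j q * pds (Y ix1 :: Y ix1 :: Y ix2 :: nil) E q
     + G1 ix2 j q * pds (Y ix2 :: Y ix1 :: Y ix2 :: nil) E q)
  - (G2 ix1 j ix2 q * pds (Y ix1 :: Y ix1 :: nil) E q
     + G2 ix2 j ix2 q * pds (Y ix2 :: Y ix1 :: nil) E q)
  - (G2 ix1 j ix1 q * pds (Y ix1 :: Y ix2 :: nil) E q
     + G2 ix2 j ix1 q * pds (Y ix2 :: Y ix2 :: nil) E q) = 0) in HL.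
lra. Qed.

Lemma Ls_222 q : U q ->
  pds (X ix2 :: Y ix2 :: Y ix2 :: nil) E q =
    (G1 ix1 ix2 q * pds (Y ix1 :: Y ix2 :: Y ix2 :: nil) E q
     + G1 ix2 ix2 q * pds (Y ix2 :: Y ix2 :: Y ix2 :: nil) E q)
  + (G2 ix1 ix2 ix2 q * pds (Y ix1 :: Y ix2 :: nil) E q
     + G2 ix2 ix2 ix2 q * pds (Y ix2 :: Y ix2 :: nil) E q)
  + (G2 ix1 ix2 ix2 q * pds (Y ix1 :: Y ix2 :: nil) E q
     + G2 ix2 ix2 ix2 q * pds (Y ix2 :: Y ix2 :: nil) E q).
Proof. intros Hq. destruct (HC q Hq) as [_ [_ [HL _]]].
specialize (HL ix2 ix2 ix2). unfold sum2 in HL.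
assert (Ha := HUa q Hq).
rewrite !(Gam1_val f d1 D0) in HL by exact Ha.
rewrite !(Gam2_val f d1 d2 D0 D1) in HL by exact Ha.
change (pds (X ix2 :: Y ix2 :: Y ix2 :: nil) E q -
    (G1 ix1 ix2 q * pds (Y ix1 :: Y ix2 :: Y ix2 :: nil) E q
     + G1 ix2 ix2 q * pds (Y ix2 :: Y ix2 :: Y ix2 :: nil) E q)
  - (G2 ix1 ix2 ix2 q * pds (Y ix1 :: Y ix2 :: nil) E q
     + G2 ix2 ix2 ix2 q * pds (Y ix2 :: Y ix2 :: nil) E q)
  - (G2 ix1 ix2 ix2 q * pds (Y ix1 :: Y ix2 :: nil) E q
     + G2 ix2 ix2 ix2 q * pds (Y ix2 :: Y ix2 :: nil) E q) = 0) in HL.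
lra. Qed.

Definition uu (r : Point) : R := r (Y ix2) / r (Y ix1).

Lemma X2_formula q : U q ->
  pds (X ix2 :: nil) E q = - (d1 (uu q) * E q + / 2 * q (Y ix1) * f (uu q) * pds (Y ix2 :: nil) E q).
Proof. intros Hq. assert (Ha := HUa q Hq).
pose proof (EL0 ix2 q Hq) as EL2. unfold ELx in EL2.
pose proof (Hxd ix2 q Hq) as Hx2.
pose proof (D1EL2 q Hq) as HD.
pose proof (Ls_j12 ix1 q Hq) as L1.
pose proof (Ls_j12 ix2 q Hq) as L2.
pose proof (H1 ix1 q Hq) as H11.
pose proof (H1 ix2 q Hq) as H12.
pose proof (H0 q Hq) as H00. unfold Hx in H00.
rewrite (sch (Y ix2 :: nil) (Y ix1) (X ix1) q Hq) in HD.
rewrite (sch (Y ix2 :: nil) (Y ix1) (X ix2) q Hq) in HD.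
rewrite (sch nil (Y ix1) (X ix2) q Hq) in HD.
rewrite (sch (Y ix2 :: nil) (Y ix2) (Y ix1) q Hq) in L1, L2.
rewrite (sch nil (Y ix2) (Y ix1) q Hq) in L1, L2, H12.
assert (eX : pds (X ix2 :: nil) E q = q (Y ix1) * pds (X ix1 :: Y ix2 :: nil) E q
   + q (Y ix2) * pds (X ix2 :: Y ix2 :: nil) E q
   + (spray f ix1 q * pds (Y ix1 :: Y ix2 :: nil) E q + spray f ix2 q * pds (Y ix2 :: Y ix2 :: nil) E q)) by lra.
assert (eA : pds (X ix2 :: Y ix1 :: nil) E q = 
  pds (X ix1 :: Y ix2 :: nil) E q
  + q (Y ix1) * pds (X ix1 :: Y ix1 :: Y ix2 :: nil) E q
  + q (Y ix2) * pds (X ix2 :: Y ix1 :: Y ix2 :: nil) E q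
  + (sp1 f d1 ix1 ix1 q * pds (Y ix1 :: Y ix2 :: nil) E q
     + spray f ix1 q * pds (Y ix1 :: Y ix1 :: Y ix2 :: nil) E q
     + (sp1 f d1 ix2 ix1 q * pds (Y ix2 :: Y ix2 :: nil) E q
     + spray f ix2 q * pds (Y ix1 :: Y ix2 :: Y ix2 :: nil) E q))) by lra.
assert (eE1 : pds (Y ix1 :: nil) E q = q (Y ix1) * pds (Y ix1 :: Y ix1 :: nil) E q
   + q (Y ix2) * pds (Y ix1 :: Y ix2 :: nil) E q) by lra.
assert (eE2 : pds (Y ix2 :: nil) E q = q (Y ix1) * pds (Y ix1 :: Y ix2 :: nil) E q
   + q (Y ix2) * pds (Y ix2 :: Y ix2 :: nil) E q) by lra.
assert (ee : E q = / 2 * (q (Y ix1) * pds (Y ix1 :: nil) E q + q (Y ix2) * pds (Y ix2 :: nil) E q)) by lra.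
clear EL2 HD H11 H12 H00.
rewrite eX in Hx2 |- *. rewrite eA in Hx2. rewrite L1, L2 in Hx2.
rewrite ee. rewrite eE1, eE2.
unfold uu.
match goal with H : ?W = 0 |- ?L = ?R => assert (Z : (L - R) + W = 0) end.
{ cbv beta iota zeta delta [sp1 sp2 spray].
  set (F0 := f (q (Y ix2) / q (Y ix1))). set (F1 := d1 (q (Y ix2) / q (Y ix1))).
  set (F2 := d2 (q (Y ix2) / q (Y ix1))). field. exact Ha. }
lra. Qed.

Definition XF (r : Point) : R :=
  pds (X ix2 :: nil) E r + (d1 (uu r) * E r + / 2 * r (Y ix1) * f (uu r) * pds (Y ix2 :: nil) E r).

Definition V1 (r : Point) : R :=
  pds (Y ix2 :: X ix2 :: nil) E r + (d2 (uu r) * / r (Y ix1) * E r + d1 (uu r) * pds (Y ix2 :: nil) E r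
   + / 2 * (d1 (uu r) * pds (Y ix2 :: nil) E r + r (Y ix1) * f (uu r) * pds (Y ix2 :: Y ix2 :: nil) E r)).

Lemma V1_zero r : U r -> V1 r = 0.
Proof. intros Hr. assert (Ha := HUa r Hr).
eapply (ipd_zero_val (Y ix2) XF r). exact Hr.
{ intros s Hs. unfold XF. rewrite (X2_formula s Hs). ring. }
unfold XF, uu. ipd_auto.
unfold V1, uu. cbv beta. field. exact Ha. Qed.

Lemma Euler22 q : U q ->
  q (Y ix1) * pds (Y ix1 :: Y ix2 :: Y ix2 :: nil) E q + q (Y ix2) * pds (Y ix2 :: Y ix2 :: Y ix2 :: nil) E q = 0.
Proof. intros Hq.
rewrite <- (sch (Y ix2 :: nil) (Y ix2) (Y ix1) q Hq).
rewrite <- (sch_loc (Y ix2) nil (Y ix2) (Y ix1) q Hq).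
eapply (ipd_zero_val (Y ix2) (fun r => r (Y ix1) * pds (Y ix2 :: Y ix1 :: nil) E r + r (Y ix2) * pds (Y ix2 :: Y ix2 :: nil) E r
  - pds (Y ix2 :: nil) E r) q). exact Hq.
{ intros s Hs. exact (H1 ix2 s Hs). }
ipd_auto. cbv beta. ring. Qed.

Lemma Landsberg q : U q ->
  d3 (uu q) * E q + 3 / 2 * q (Y ix1) * d2 (uu q) * pds (Y ix2 :: nil) E q = 0.
Proof. intros Hq. assert (Ha := HUa q Hq).
eassert (Hw : ipd (Y ix2) V1 q _).
{ unfold V1, uu. ipd_auto. }
apply (ipd_zero U (Y ix2) V1 q _ lopenU Hq V1_zero) in Hw.
cbv beta in Hw.
rewrite (sch_loc (Y ix2) nil (Y ix2) (X ix2) q Hq) in Hw.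
rewrite (sch (Y ix2 :: nil) (Y ix2) (X ix2) q Hq) in Hw.
rewrite (Ls_222 q Hq) in Hw.
assert (eT : pds (Y ix1 :: Y ix2 :: Y ix2 :: nil) E q
   = - (q (Y ix2) / q (Y ix1)) * pds (Y ix2 :: Y ix2 :: Y ix2 :: nil) E q).
{ pose proof (Euler22 q Hq) as Eu.
  apply (Rmult_eq_reg_l (q (Y ix1))); [|exact Ha]. field_simplify; [|exact Ha]. lra. }
rewrite eT in Hw.
pose proof (H1 ix2 q Hq) as H12.
rewrite (sch nil (Y ix2) (Y ix1) q Hq) in H12.
assert (eE2 : pds (Y ix2 :: nil) E q = q (Y ix1) * pds (Y ix1 :: Y ix2 :: nil) E q
   + q (Y ix2) * pds (Y ix2 :: Y ix2 :: nil) E q) by lra.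
rewrite eE2 in Hw |- *. unfold uu. clear H12.
match goal with H : ?W = 0 |- ?L = 0 => assert (Z : L = (q (Y ix1)) ^ 2 * W) end.
{ cbv beta iota zeta delta [sp1 sp2 spray].
  set (F0 := f (q (Y ix2) / q (Y ix1))). set (F1 := d1 (q (Y ix2) / q (Y ix1))).
  set (F2 := d2 (q (Y ix2) / q (Y ix1))). set (F3 := d3 (q (Y ix2) / q (Y ix1))).
  field. exact Ha. }
rewrite Z, Hw. ring. Qed.

Definition Psi (r : Point) : R := d2 (uu r) ^ 2 * E r ^ 3.

Lemma Psi_Y2 r : U r -> ipd (Y ix2) Psi r 0.
Proof. intros Hr. assert (Ha := HUa r Hr). pose proof (Landsberg r Hr) as L.
eapply ipd_val. unfold Psi, uu. ipd_auto. unfold uu in L. cbv beta.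
match type of L with ?W = 0 => transitivity (2 * d2 (r (Y ix2) / r (Y ix1)) * E r ^ 2 / r (Y ix1) * W) end.
field. exact Ha. rewrite L. ring. Qed.

Lemma E_pos r : U r -> 0 < E r.
Proof. intros Hr. destruct (HC r Hr) as [_ [_ [_ HP]]].
assert (Ha := HUa r Hr).
specialize (HP (fun i => r (Y i)) (or_introl Ha)).
unfold sum2 in HP. cbv beta in HP.
pose proof (H1 ix1 r Hr) as A1. pose proof (H1 ix2 r Hr) as A2. pose proof (H0 r Hr) as A0.
unfold Hx in A0. unfold gmet in HP.
change (0 < pds (Y ix1 :: Y ix1 :: nil) E r * r (Y ix1) * r (Y ix1) + pds (Y ix1 :: Y ix2 :: nil) E r * r (Y ix1) * r (Y ix2) +
  (pds (Y ix2 :: Y ix1 :: nil) E r * r (Y ix2) * r (Y ix1) + pds (Y ix2 :: Y ix2 :: nil) E r * r (Y ix2) * r (Y ix2))) in HP.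
assert (Z : pds (Y ix1 :: Y ix1 :: nil) E r * r (Y ix1) * r (Y ix1) + pds (Y ix1 :: Y ix2 :: nil) E r * r (Y ix1) * r (Y ix2) +
  (pds (Y ix2 :: Y ix1 :: nil) E r * r (Y ix2) * r (Y ix1) + pds (Y ix2 :: Y ix2 :: nil) E r * r (Y ix2) * r (Y ix2))
  = r (Y ix1) * (r (Y ix1) * pds (Y ix1 :: Y ix1 :: nil) E r + r (Y ix2) * pds (Y ix1 :: Y ix2 :: nil) E r - pds (Y ix1 :: nil) E r)
  + r (Y ix2) * (r (Y ix1) * pds (Y ix2 :: Y ix1 :: nil) E r + r (Y ix2) * pds (Y ix2 :: Y ix2 :: nil) E r - pds (Y ix2 :: nil) E r)
  + (r (Y ix1) * pds (Y ix1 :: nil) E r + r (Y ix2) * pds (Y ix2 :: nil) E r - 2 * E r) + 2 * E r) by ring.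
rewrite Z, A1, A2, A0 in HP. lra. Qed.

Lemma SE q : U q -> q (Y ix1) * pds (X ix1 :: nil) E q + q (Y ix2) * pds (X ix2 :: nil) E q
  = -2 * q (Y ix1) * f (uu q) * E q.
Proof. intros Hq.
pose proof (EL0 ix1 q Hq) as L1. pose proof (EL0 ix2 q Hq) as L2. unfold ELx in L1, L2.
pose proof (Hxd ix1 q Hq) as K1. pose proof (Hxd ix2 q Hq) as K2.
pose proof (H1 ix1 q Hq) as A1. pose proof (H1 ix2 q Hq) as A2. pose proof (H0 q Hq) as A0.
unfold Hx in A0. unfold spray in L1, L2. unfold uu.
set (F0 := f (q (Y ix2) / q (Y ix1))) in *.
set (a := q (Y ix1)) in *. set (b := q (Y ix2)) in *.
match type of L1 with ?l1 = 0 => match type of L2 with ?l2 = 0 =>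
match type of K1 with ?k1 = 0 => match type of K2 with ?k2 = 0 =>
match type of A1 with ?a1 = 0 => match type of A2 with ?a2 = 0 =>
match type of A0 with ?a0 = 0 =>
match goal with |- ?L = ?R =>
  assert (Z : L - R = a * l1 + b * l2 - (a * k1 + b * k2) - a ^ 2 * F0 * a1 - a * b * F0 * a2 - a * F0 * a0) by ring
end end end end end end end end.
rewrite L1, L2, K1, K2, A1, A2, A0 in Z. lra. Qed.

Lemma Psi_X q : U q -> q (Y ix1) * pd (X ix1) Psi q + q (Y ix2) * pd (X ix2) Psi q
   = -6 * q (Y ix1) * f (uu q) * Psi q.
Proof. intros Hq. assert (Ha := HUa q Hq).
eassert (K1 : ipd (X ix1) Psi q _). { unfold Psi, uu. ipd_auto. }
eassert (K2 : ipd (X ix2) Psi q _). { unfold Psi, uu. ipd_auto. }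
rewrite (ipd_pd _ _ _ _ K1), (ipd_pd _ _ _ _ K2).
transitivity (3 * d2 (uu q) ^ 2 * E q ^ 2 *
  (q (Y ix1) * pds (X ix1 :: nil) E q + q (Y ix2) * pds (X ix2 :: nil) E q)).
{ unfold uu. cbv beta. field. exact Ha. }
rewrite (SE q Hq). unfold Psi. ring. Qed.

Definition inbox (p : Point) (eps : R) (q : Point) : Prop := forall c, Rabs (q c - p c) < eps.

Lemma inbox_upd p eps q d t : inbox p eps q -> Rabs (t - p d) < eps -> inbox p eps (upd q d t).
Proof. intros Hq Ht c. destruct (Coord_eq_dec d c) as [<-|Hn].
rewrite upd_same; exact Ht. rewrite upd_other by exact Hn. apply Hq. Qed.

Lemma inbox_self p eps : 0 < eps -> inbox p eps p.
Proof. intros He c. replace (p c - p c) with 0 by ring. rewrite Rabs_R0; exact He. Qed.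

Lemma box_const p eps : (forall q, inbox p eps q -> U q) ->
  forall q, inbox p eps q -> Psi q = Psi (upd q (Y ix2) (p (Y ix2))).
Proof. intros HB q Hq.
destruct (MVT_cor4 (fun t => Psi (upd q (Y ix2) t)) (fun _ => 0) (p (Y ix2))
   (Rabs (q (Y ix2) - p (Y ix2)))) with (b := q (Y ix2)) as [c [Hc1 _]].
- intros c Hc. assert (Hr : U (upd q (Y ix2) c)).
  { apply HB. apply inbox_upd. exact Hq. eapply Rle_lt_trans. exact Hc. apply Hq. }
  pose proof (Psi_Y2 _ Hr) as H. apply ipd_unfold in H. rewrite upd_same in H.
  eapply is_derive_ext. 2: exact H. intros t. simpl. now rewrite upd_upd.
- apply Rle_refl.
- rewrite upd_id in Hc1. lra. Qed.

Lemma xd_const p eps : (forall q, inbox p eps q -> U q) -> 0 < eps ->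
  forall i t, Rabs (t - p (Y ix2)) < eps ->
  pd (X i) Psi (upd p (Y ix2) t) = pd (X i) Psi p.
Proof. intros HB He i t Ht. unfold pd.
rewrite upd_other by discriminate. apply Derive_ext_loc.
apply (locally_R _ _ eps He). intros s Hs.
rewrite (box_const p eps HB).
- f_equal. apply functional_extensionality; intros d.
  destruct d as [[|]|[|]], i; reflexivity.
- apply inbox_upd. apply inbox_upd. apply inbox_self; exact He. exact Ht. exact Hs. Qed.

Lemma line_rel p eps : (forall q, inbox p eps q -> U q) -> 0 < eps ->
  forall t, Rabs (t - p (Y ix2)) < eps ->
  p (Y ix1) * pd (X ix1) Psi p + t * pd (X ix2) Psi p
   = -6 * p (Y ix1) * f (t / p (Y ix1)) * Psi p.
Proof. intros HB He t Ht.
assert (Hb : inbox p eps (upd p (Y ix2) t)) by (apply inbox_upd; [apply inbox_self|]; assumption).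
pose proof (Psi_X _ (HB _ Hb)) as H.
rewrite !(xd_const p eps HB He) in H by exact Ht.
rewrite (box_const p eps HB _ Hb) in H. rewrite upd_upd, upd_id in H.
unfold uu in H. rewrite upd_same, upd_other in H by discriminate. exact H. Qed.

Lemma d2_zero_near p : U p -> exists eta, 0 < eta /\ forall w, Rabs (w - uu p) < eta -> d2 w = 0.
Proof. intros Hp. destruct (HU p Hp) as [eps [He HB']].
assert (HB : forall q, inbox p eps q -> U q) by exact HB'.
assert (Ha := HUa p Hp). set (a0 := p (Y ix1)) in *.
assert (Ha0 : 0 < Rabs a0) by (apply Rabs_pos_lt; exact Ha).
exists (eps / Rabs a0). split. apply Rdiv_lt_0_compat; assumption.
assert (Ht : forall w, Rabs (w - uu p) < eps / Rabs a0 -> Rabs (a0 * w - p (Y ix2)) < eps).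
{ intros w Hw. replace (a0 * w - p (Y ix2)) with (a0 * (w - uu p)) by (unfold uu, a0; field; exact Ha).
  rewrite Rabs_mult. apply (Rmult_lt_compat_l (Rabs a0)) in Hw; [|exact Ha0].
  replace (Rabs a0 * (eps / Rabs a0)) with eps in Hw by (field; lra). exact Hw. }
destruct (Req_dec (Psi p) 0) as [Hc|Hc].
- intros w Hw.
  assert (Hb : inbox p eps (upd p (Y ix2) (a0 * w))) by (apply inbox_upd; [apply inbox_self; exact He|apply Ht; exact Hw]).
  pose proof (box_const p eps HB _ Hb) as Hk. rewrite upd_upd, upd_id, Hc in Hk.
  pose proof (E_pos _ (HB _ Hb)) as HEp.
  unfold Psi, uu in Hk. rewrite upd_same, upd_other in Hk by discriminate.
  fold a0 in Hk. replace (a0 * w / a0) with w in Hk by (field; exact Ha).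
  assert (HE3 : 0 < E (upd p (Y ix2) (a0 * w)) ^ 3) by (apply pow_lt; exact HEp).
  assert (d2 w ^ 2 = 0).
  { apply (Rmult_eq_reg_r (E (upd p (Y ix2) (a0 * w)) ^ 3)). lra. lra. }
  destruct (Req_dec (d2 w) 0) as [Hz|Hz]; [exact Hz|]. exfalso. exact (pow_nonzero _ 2 Hz H).
- exfalso. apply Hc.
  assert (Hd : d2 (uu p) = 0).
  { apply (d2_of_affine f d1 d2 (uu p) (eps / Rabs a0)
       (- pd (X ix1) Psi p / (6 * Psi p)) (- pd (X ix2) Psi p / (6 * Psi p)) D0 D1).
    apply Rdiv_lt_0_compat; assumption.
    intros w Hw. pose proof (line_rel p eps HB He (a0 * w) (Ht w Hw)) as L.
    fold a0 in L. replace (a0 * w / a0) with w in L by (field; exact Ha).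
    apply (Rmult_eq_reg_l (6 * a0 * Psi p)).
    transitivity (- (a0 * pd (X ix1) Psi p + a0 * w * pd (X ix2) Psi p)).
    rewrite L. ring. field. exact Hc.
    intros Z. apply Rmult_integral in Z. destruct Z as [Z|Z]; [|exact (Hc Z)].
    apply Rmult_integral in Z. destruct Z as [Z|Z]; lra. }
  unfold Psi. rewrite Hd. ring.
Qed.

End Main.

Ltac ipd_step0 :=
  first [ apply ipd_const
        | apply ipd_coord_same
        | (apply ipd_coord_diff; discriminate)
        | apply ipd_plus | apply ipd_minus | apply ipd_opp | apply ipd_mult ].

Definition Qg (A B C : R) (r : Point) : R :=
  A * r (Y ix1) * r (Y ix1) + B * r (Y ix1) * r (Y ix2) + C * r (Y ix2) * r (Y ix2).
Definition Lin (L1 L2 : R) (r : Point) : R := L1 * r (Y ix1) + L2 * r (Y ix2).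

Lemma pd_Qg k A B C : pd (Y k) (Qg A B C) =
  match k with ix1 => Lin (2 * A) B | ix2 => Lin B (2 * C) end.
Proof. apply functional_extensionality; intros r. apply ipd_pd.
destruct k; unfold Qg, Lin; (eapply ipd_val; [repeat ipd_step0|]); cbv beta; ring. Qed.

Lemma pd_Lin j L1 L2 : pd (Y j) (Lin L1 L2) = fun _ => match j with ix1 => L1 | ix2 => L2 end.
Proof. apply functional_extensionality; intros r. apply ipd_pd.
destruct j; unfold Lin; (eapply ipd_val; [repeat ipd_step0|]); cbv beta; ring. Qed.

Lemma pd_cst i K : pd (Y i) (fun _ : Point => K) = fun _ => 0.
Proof. apply functional_extensionality; intros r. apply ipd_pd. apply ipd_const. Qed.

Lemma pds3_Qg i j k A B C r : pds (Y i :: Y j :: Y k :: nil) (Qg A B C) r = 0.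
Proof. simpl. rewrite pd_Qg. destruct k; rewrite pd_Lin; rewrite pd_cst; reflexivity. Qed.

Lemma dist_div_cont (b a m : R) : a <> 0 -> 0 < m -> exists d, 0 < d /\
  forall t, Rabs (t - a) < d -> t <> 0 /\ Rabs (b / t - b / a) < m.
Proof. intros Ha Hm.
assert (Hc : continuity_pt (fun t => b / t) a).
{ apply continuity_pt_div. apply continuity_pt_const. intros x y; reflexivity.
  apply continuity_pt_id. exact Ha. }
destruct (Hc m Hm) as [d [Hd H]].
exists (Rmin d (Rabs a)). split. apply Rmin_pos. exact Hd. apply Rabs_pos_lt; exact Ha.
intros t Ht. split.
- intros ->. rewrite Rminus_0_l, Rabs_Ropp in Ht. pose proof (Rmin_r d (Rabs a)). lra.
- destruct (Req_dec t a) as [->|Hta].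
  + replace (b / a - b / a) with 0 by ring. rewrite Rabs_R0; exact Hm.
  + apply (H t). split. split. exact I. auto.
    simpl. unfold R_dist. eapply Rlt_le_trans. exact Ht. apply Rmin_l. Qed.

Section Bw.
Variable f : R -> R.
Variables (p : Point) (eta alpha beta : R).
Hypothesis Hp : p (Y ix1) <> 0.
Hypothesis He : 0 < eta.
Hypothesis Hf : forall w, Rabs (w - p (Y ix2) / p (Y ix1)) < eta -> f w = alpha + beta * w.

Definition V (r : Point) : Prop := r (Y ix1) <> 0 /\ Rabs (r (Y ix2) / r (Y ix1) - p (Y ix2) / p (Y ix1)) < eta.

Lemma lopen_V : lopen V.
Proof. intros r [Hr1 Hr2] c. set (u0 := p (Y ix2) / p (Y ix1)) in *.
set (m := eta - Rabs (r (Y ix2) / r (Y ix1) - u0)).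
assert (Hm : 0 < m) by (unfold m; lra).
destruct c as [i|[|]].
- exists 1. split. lra. intros t _. unfold V. rewrite !upd_other by discriminate. split; assumption.
- destruct (dist_div_cont (r (Y ix2)) (r (Y ix1)) m Hr1 Hm) as [d [Hd H]].
  exists d. split. exact Hd. intros t Ht. destruct (H t Ht) as [H1 H2].
  unfold V. fold u0. rewrite upd_same, upd_other by discriminate. split. exact H1.
  replace (r (Y ix2) / t - u0) with ((r (Y ix2) / t - r (Y ix2) / r (Y ix1)) + (r (Y ix2) / r (Y ix1) - u0)) by ring.
  eapply Rle_lt_trans. apply Rabs_triang. unfold m in H2. lra.
- exists (Rabs (r (Y ix1)) * m). split. apply Rmult_lt_0_compat. apply Rabs_pos_lt; exact Hr1. exact Hm.
  intros t Ht. unfold V. fold u0. rewrite upd_same, upd_other by discriminate. split. exact Hr1.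
  replace (t / r (Y ix1) - u0) with ((t - r (Y ix2)) / r (Y ix1) + (r (Y ix2) / r (Y ix1) - u0)) by (field; exact Hr1).
  eapply Rle_lt_trans. apply Rabs_triang. unfold Rdiv at 1. rewrite Rabs_mult, Rabs_inv.
  assert (Ha : 0 < Rabs (r (Y ix1))) by (apply Rabs_pos_lt; exact Hr1).
  assert (Rabs (t - r (Y ix2)) * / Rabs (r (Y ix1)) < m).
  { apply (Rmult_lt_reg_r (Rabs (r (Y ix1)))). exact Ha.
    rewrite Rmult_assoc, Rinv_l by lra. lra. }
  unfold m in H. lra. Qed.

Lemma berwald_zero i j k l : berwald f i j k l p = 0.
Proof. unfold berwald.
assert (HV : V p). { split. exact Hp. replace (p (Y ix2) / p (Y ix1) - p (Y ix2) / p (Y ix1)) with 0 by ring.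
  rewrite Rabs_R0; exact He. }
destruct l.
- rewrite (pds_loc V (spray f ix1) (Qg alpha beta 0) lopen_V) by (exact HV || (intros r [Hr1 Hr2]; unfold spray, Qg; rewrite Hf by exact Hr2; field; exact Hr1)).
  rewrite pds3_Qg. ring.
- rewrite (pds_loc V (spray f ix2) (Qg 0 alpha beta) lopen_V) by (exact HV || (intros r [Hr1 Hr2]; unfold spray, Qg; rewrite Hf by exact Hr2; field; exact Hr1)).
  rewrite pds3_Qg. ring.
Qed.
End Bw.

Theorem mainTheorem14 (f : R -> R) :
  real_analytic f ->
  (exists t, f t <> 0) ->
  ~ (exists (U : Point -> Prop) (E : Point -> R),
       open_pts U /\
       (forall p, U p -> p (Y ix1) <> 0) /\
       (exists p i j k l, U p /\ berwald f i j k l p <> 0) /\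
       smooth_on U E /\
       (forall p, U p ->
          cond_H E p /\ cond_EL f E p /\ cond_Ls f E p /\ posdef_g E p)).
Proof.
intros Han _ [U [E [HU [HUa [[p [i [j [k [l [Hp Hb]]]]]] [HE HC]]]]]].
pose proof (analytic_LPS f Han) as L0.
destruct (LPS_derive f L0) as [D0 L1].
destruct (LPS_derive _ L1) as [D1 L2].
destruct (LPS_derive _ L2) as [D2 _].
destruct (d2_zero_near f (Derive f) (Derive (Derive f)) (Derive (Derive (Derive f)))
   D0 D1 D2 U E HU HUa HE HC p Hp) as [eta [He Hz]].
pose proof (affine_of_d2 f (Derive f) (Derive (Derive f)) (uu p) eta D0 D1 He Hz) as Haff.
apply Hb.
apply (berwald_zero f p (eta / 4) (f (uu p) - Derive f (uu p) * uu p) (Derive f (uu p))).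
- apply HUa; exact Hp.
- lra.
- intros w Hw. rewrite (Haff w). ring. unfold uu. lra.
Qed.
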